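(* Let $P$ be a dcpo such that $\Sigma P$ is well-filtered. The following are equivalent: (1) $\Sigma P$ is locally compact. (2) $\mathsf{K}(\Sigma P)$ is a continuous semilattice, and the upper Vietoris topology and the Scott topology on $\mathsf{K}(\Sigma P)$ coincide. (3) $\mathsf{K}(\Sigma P)$ is a continuous semilattice, and $\Sigma P$ has property Q. (4) $\mathsf{K}(\Sigma P)$ is a continuous semilattice. (5) $\Sigma P$ is core compact.
   Context: A dcpo is a poset in which every directed subset has a supremum. For a poset $Q$, the Scott topology consists of upper sets $U$ such that every directed $D$ whose supremum exists and lies in $U$ meets $U$; $\Sigma Q$ is $Q$ with its Scott topology. For a $T_0$ space $X$: specialization order $x\le y$ iff $x\in\overline{\{y\}}$; saturated = upper set; $\mathsf{K}(X)$ is the set of nonempty compact saturated subsets ordered by reverse inclusion (suprema of families, when they exist, are intersections, which exist iff the intersection is in $\mathsf{K}(X)$); $a\ll b$ in a poset means for every directed $D$ with existing $\bigvee D\ge b$ some $d\in D$ has $d\ge a$; $\mathsf{K}(X)$ is a continuous semilattice if it is directed complete and each $K$ is the directed supremum of $\{L: L\ll K\}$. Upper Vietoris topology on $\mathsf{K}(X)$: base $\{\Box U\}$ with $\Box U=\{K: K\subseteq U\}$, $U$ open. $X$ is well-filtered if for every open $U$ and every family $\mathcal K\subseteq \mathsf{K}(X)$ filtered under inclusion, $\bigcap\mathcal K\subseteq U$ implies some $K\in\mathcal K$ is contained in $U$. Property Q: for all $K_1,K_2\in\mathsf{K}(X)$, $K_1\ll K_2$ iff $K_2\subseteq\operatorname{int}K_1$.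 Locally compact: each point has a neighborhood base of compact sets. Core compact: the lattice of open sets is a continuous lattice. *)

(* Defs.v *)
From Stdlib Require Import List.

Definition partial_order {X : Type} (le : X -> X -> Prop) : Prop :=
  (forall x, le x x) /\
  (forall x y z, le x y -> le y z -> le x z) /\
  (forall x y, le x y -> le y x -> x = y).

Definition upper_set {X : Type} (le : X -> X -> Prop) (A : X -> Prop) : Prop :=
  forall x y, A x -> le x y -> A y.

Definition directed {X : Type} (le : X -> X -> Prop) (D : X -> Prop) : Prop :=
  (exists d, D d) /\
  (forall a b, D a -> D b -> exists c, D c /\ le a c /\ le b c).

Definition is_sup {X : Type} (le : X -> X -> Prop) (D : X -> Prop) (s : X) : Prop :=
  (forall d, D d -> le d s) /\
  (forall u, (forall d, D d -> le d u) -> le s u).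

Definition directed_complete {X : Type} (le : X -> X -> Prop) : Prop :=
  forall D, directed le D -> exists s, is_sup le D s.

Definition scott_open {X : Type} (le : X -> X -> Prop) (U : X -> Prop) : Prop :=
  upper_set le U /\
  (forall D s, directed le D -> is_sup le D s -> U s -> exists d, D d /\ U d).

Definition way_below {X : Type} (le : X -> X -> Prop) (a b : X) : Prop :=
  forall D s, directed le D -> is_sup le D s -> le b s -> exists d, D d /\ le a d.

Definition continuous_semilattice {X : Type} (le : X -> X -> Prop) : Prop :=
  directed_complete le /\
  (forall x, directed le (fun y => way_below le y x) /\
             is_sup le (fun y => way_below le y x) x).

Definition continuous_lattice {X : Type} (le : X -> X -> Prop) : Prop :=
  (forall D : X -> Prop, exists s, is_sup le D s) /\
  (forall x, directed le (fun y => way_below le y x) /\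
             is_sup le (fun y => way_below le y x) x).

Section Topo.
Context {X : Type} (opn : (X -> Prop) -> Prop).

Definition specialization (x y : X) : Prop := forall U, opn U -> U x -> U y.

Definition saturated (A : X -> Prop) : Prop := upper_set specialization A.

Definition compact (K : X -> Prop) : Prop :=
  forall F : (X -> Prop) -> Prop,
    (forall U, F U -> opn U) ->
    (forall x, K x -> exists U, F U /\ U x) ->
    exists l : list (X -> Prop),
      (forall U, In U l -> F U) /\ (forall x, K x -> exists U, In U l /\ U x).

Definition interior (A : X -> Prop) (x : X) : Prop :=
  exists U, opn U /\ U x /\ forall y, U y -> A y.

Definition is_KX (K : X -> Prop) : Prop :=
  (exists x, K x) /\ compact K /\ saturated K.

Definition KX : Type := { K : X -> Prop | is_KX K }.

Definition KX_set (K : KX) : X -> Prop := proj1_sig K.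

Definition Kle (A B : KX) : Prop := forall x, KX_set B x -> KX_set A x.

(** upper Vietoris topology on K(X): generated by the base Box U = {K | K ⊆ U} *)
Definition upper_vietoris_open (W : KX -> Prop) : Prop :=
  forall K, W K ->
    exists U, opn U /\ (forall x, KX_set K x -> U x) /\
      (forall L : KX, (forall x, KX_set L x -> U x) -> W L).

Definition well_filtered : Prop :=
  forall (U : X -> Prop) (FK : KX -> Prop),
    opn U ->
    (exists K, FK K) ->
    (forall K1 K2, FK K1 -> FK K2 ->
       exists K3, FK K3 /\ (forall x, KX_set K3 x -> KX_set K1 x /\ KX_set K2 x)) ->
    (forall x, (forall K, FK K -> KX_set K x) -> U x) ->
    exists K, FK K /\ (forall x, KX_set K x -> U x).

Definition property_Q : Prop :=
  forall K1 K2 : KX,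
    way_below Kle K1 K2 <-> (forall x, KX_set K2 x -> interior (KX_set K1) x).

Definition locally_compact : Prop :=
  forall x U, opn U -> U x ->
    exists K, compact K /\ interior K x /\ (forall y, K y -> U y).

Definition OX : Type := { U : X -> Prop | opn U }.
Definition Ole (U V : OX) : Prop := forall x, proj1_sig U x -> proj1_sig V x.

Definition core_compact : Prop := continuous_lattice Ole.

End Topo.

(* Main.v *)
Require Import Defs.
From Stdlib Require Import List Classical ClassicalEpsilon Arith Lia.
From mathcomp Require Import ssreflect ssrbool.
From mathcomp Require classical_sets boolp.

Lemma zorn_prop (T:Type) (t0:T) (R: T->T->Prop) :
  (forall t, R t t) -> (forall r s t, R r s -> R s t -> R r t) ->
  (forall A : T -> Prop, (forall s t, A s -> A t -> R s t \/ R t s) -> exists t, forall s, A s -> R s t) ->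
  exists t, forall s, R t s -> R s t.
Proof.
move=> Rr Rt Ch.
pose Rb := (fun a b => boolp.asbool (R a b)).
have r1 : forall t, Rb t t by move=> t; apply/boolp.asboolP.
have r2 : forall r s t, Rb r s -> Rb s t -> Rb r t.
  by move=> r s t /boolp.asboolP H1 /boolp.asboolP H2; apply/boolp.asboolP; exact: Rt H1 H2.
have r3 : forall A, classical_sets.total_on A Rb -> exists t, forall s, A s -> Rb s t.
  move=> A HA.
  have HA' : forall s t, A s -> A t -> R s t \/ R t s.
    move=> s u As Au; case: (HA s u As Au) => [/boolp.asboolP H|/boolp.asboolP H]; [left|right]; exact: H.
  have [t Ht] := Ch A HA'.
  by exists t => s As; apply/boolp.asboolP; exact: Ht.
have [t Ht] := @classical_sets.ZL_preorder T t0 Rb r1 r2 r3.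
exists t => s Rs; apply/boolp.asboolP; apply: Ht; exact/boolp.asboolP.
Qed.

Section Pre.
Context {X : Type} (R : X -> X -> Prop) (Rr : forall x, R x x)
  (Rt : forall x y z, R x y -> R y z -> R x z).

Lemma wb_le a b : way_below R a b -> R a b.
Proof.
  intro H. destruct (H (fun d => d = b) b) as [d [e Hd]].
  - split. exists b; auto. intros a0 b0 Ha Hb; subst; exists b; auto.
  - split. intros d e; subst; apply Rr. intros u Hu; apply Hu; reflexivity.
  - apply Rr.
  - subst; auto.
Qed.

Lemma wb_trans_r a b c : way_below R a b -> R b c -> way_below R a c.
Proof. intros H Hbc D s HD Hs Hcs. apply (H D s HD Hs). eauto. Qed.

Lemma wb_trans_l a b c : R a b -> way_below R b c -> way_below R a c.
Proof. intros Hab H D s HD Hs Hcs. destruct (H D s HD Hs Hcs) as [d [Dd Hd]]. exists d; split; eauto. Qed.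

Lemma interpolate :
  (forall x, directed R (fun y => way_below R y x) /\ is_sup R (fun y => way_below R y x) x) ->
  forall a b, way_below R a b -> exists c, way_below R a c /\ way_below R c b.
Proof.
  intros Hc a b Hab.
  set (I := fun y => exists z, way_below R y z /\ way_below R z b).
  assert (HI : directed R I).
  { split.
    - destruct (proj1 (proj1 (Hc b))) as [z Hz].
      destruct (proj1 (proj1 (Hc z))) as [y Hy]. exists y, z; auto.
    - intros y1 y2 [z1 [H1 H1']] [z2 [H2 H2']].
      destruct (proj2 (proj1 (Hc b)) z1 z2 H1' H2') as [z3 [H3 [L1 L2]]].
      assert (A1 : way_below R y1 z3) by (eapply wb_trans_r; eauto).
      assert (A2 : way_below R y2 z3) by (eapply wb_trans_r; eauto).
      destruct (proj2 (proj1 (Hc z3)) y1 y2 A1 A2) as [y3 [H4 [L3 L4]]].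
      exists y3; split; [exists z3; auto | auto]. }
  assert (Hs : is_sup R I b).
  { split.
    - intros y [z [H1 H2]]. apply wb_le in H1. apply wb_le in H2. eauto.
    - intros u Hu. apply (proj2 (proj2 (Hc b))). intros z Hz.
      apply (proj2 (proj2 (Hc z))). intros y Hy. apply Hu. exists z; auto. }
  destruct (Hab I b HI Hs (Rr b)) as [y [[z [Hyz Hzb]] Hay]].
  exists z; split; auto. eapply wb_trans_l; eauto.
Qed.

End Pre.

Lemma directed_ext {X} (R : X -> X -> Prop) (A B : X -> Prop) :
  (forall x, A x <-> B x) -> directed R A -> directed R B.
Proof.
  intros E [[d Hd] H]. split. exists d; apply E; auto.
  intros a b Ha Hb. destruct (H a b (proj2 (E a) Ha) (proj2 (E b) Hb)) as [c [Hc L]].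
  exists c; split; auto; apply E; auto.
Qed.

Lemma is_sup_ext {X} (R : X -> X -> Prop) (A B : X -> Prop) s :
  (forall x, A x <-> B x) -> is_sup R A s -> is_sup R B s.
Proof.
  intros E [H1 H2]. split. intros d Hd; apply H1, E; auto.
  intros u Hu. apply H2. intros d Hd. apply Hu, E; auto.
Qed.

Section Main.
Variable P : Type.
Variable le : P -> P -> Prop.
Hypothesis Hpo : partial_order le.
Hypothesis Hwf : well_filtered (scott_open le).

Notation O := (scott_open le).

Lemma le_refl x : le x x. Proof. apply (proj1 Hpo). Qed.
Lemma le_trans x y z : le x y -> le y z -> le x z. Proof. apply (proj1 (proj2 Hpo)). Qed.

Lemma open_upper U x y : O U -> U x -> le x y -> U y.
Proof. intros [H _] Ux Hxy. eapply H; eauto. Qed.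

Lemma open_ext (A B : P -> Prop) : (forall x, A x <-> B x) -> O A -> O B.
Proof.
  intros E [H1 H2]. split.
  - intros x y Bx Hxy. apply E. apply (H1 x y); auto. apply E; auto.
  - intros D s HD Hs Bs. destruct (H2 D s HD Hs (proj2 (E s) Bs)) as [d [Dd Ad]].
    exists d; split; auto; apply E; auto.
Qed.

Lemma open_union' (I : Type) (S : I -> Prop) (f : I -> P -> Prop) :
  (forall i, S i -> O (f i)) -> O (fun x => exists i, S i /\ f i x).
Proof.
  intros Hf. split.
  - intros x y [i [Si fx]] Hxy. exists i; split; auto. eapply open_upper; eauto.
  - intros D s HD Hs [i [Si fs]]. destruct (proj2 (Hf i Si) D s HD Hs fs) as [d [Dd fd]].
    exists d; split; auto. exists i; auto.
Qed.

Lemma open_union2 A B : O A -> O B -> O (fun x => A x \/ B x).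
Proof.
  intros HA HB. apply (open_ext (fun x => exists i : bool, True /\ (if i then A else B) x)).
  - intro x; split. intros [[|] [_ H]]; auto. intros [H|H]; [exists true|exists false]; simpl; auto.
  - apply (open_union' bool (fun _ => True) (fun i => if i then A else B)).
    intros [|] _; auto.
Qed.

Lemma open_empty : O (fun _ => False).
Proof. split. intros x y []. intros D s _ _ []. Qed.

Lemma open_full : O (fun _ => True).
Proof. split. intros x y _ _; auto. intros D s [[d Hd] _] _ _. exists d; auto. Qed.

Lemma open_inter U V : O U -> O V -> O (fun x => U x /\ V x).
Proof.
  intros HU HV. split.
  - intros x y [Ux Vx] Hxy. split; eapply open_upper; eauto.
  - intros D s HD Hs [Us Vs].
    destruct (proj2 HU D s HD Hs Us) as [d1 [D1 U1]].
    destruct (proj2 HV D s HD Hs Vs) as [d2 [D2 V2]].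
    destruct (proj2 HD d1 d2 D1 D2) as [d3 [D3 [L1 L2]]].
    exists d3; repeat split; auto; eapply open_upper; eauto.
Qed.

Lemma open_compl_down y : O (fun x => ~ le x y).
Proof.
  split.
  - intros x z Hx Hxz Hzy. apply Hx. eapply le_trans; eauto.
  - intros D s HD Hs Hns. apply NNPP. intro Hn. apply Hns.
    apply (proj2 Hs). intros d Dd. apply NNPP. intro H. apply Hn. exists d; auto.
Qed.

Lemma spec_le x y : specialization O x y -> le x y.
Proof.
  intro H. apply NNPP. intro Hn. apply (H _ (open_compl_down y) Hn). apply le_refl.
Qed.

Lemma upper_saturated A : upper_set le A -> saturated O A.
Proof. intros H x y Ax Sxy. apply (H x y Ax (spec_le x y Sxy)). Qed.

Lemma saturated_upper A : saturated O A -> upper_set le A.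
Proof. intros H x y Ax Hxy. apply (H x y Ax). intros U HU Ux. eapply open_upper; eauto. Qed.

Lemma interior_open A : O (interior O A).
Proof.
  apply (open_ext (fun x => exists U, (O U /\ forall y, U y -> A y) /\ U x)).
  - intro x; split. intros [U [[H1 H2] H3]]. exists U; auto.
    intros [U [H1 [H2 H3]]]. exists U; auto.
  - apply (open_union' (P -> Prop) (fun U => O U /\ forall y, U y -> A y) (fun U => U)).
    intros U [H _]; auto.
Qed.

Lemma interior_sub A x : interior O A x -> A x.
Proof. intros [U [_ [Ux H]]]; auto. Qed.

Lemma interior_mono (A B : P -> Prop) x : (forall y, A y -> B y) -> interior O A x -> interior O B x.
Proof. intros H [U [H1 [H2 H3]]]. exists U; auto. Qed.

Lemma open_interior U x : O U -> U x -> interior O U x.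
Proof. intros. exists U; auto. Qed.

Lemma compact_empty : compact O (fun _ => False).
Proof. intros F _ _. exists nil. split. intros U []. intros x []. Qed.

Lemma compact_union K1 K2 : compact O K1 -> compact O K2 -> compact O (fun x => K1 x \/ K2 x).
Proof.
  intros H1 H2 F HF Hc.
  destruct (H1 F HF (fun x Kx => Hc x (or_introl Kx))) as [l1 [L1 C1]].
  destruct (H2 F HF (fun x Kx => Hc x (or_intror Kx))) as [l2 [L2 C2]].
  exists (l1 ++ l2). split.
  - intros U HU. apply in_app_or in HU. destruct HU; auto.
  - intros x [Kx|Kx].
    + destruct (C1 x Kx) as [U [HU Ux]]. exists U; split; auto. apply in_or_app; auto.
    + destruct (C2 x Kx) as [U [HU Ux]]. exists U; split; auto. apply in_or_app; auto.
Qed.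

Lemma compact_up K : compact O K -> compact O (fun y => exists x, K x /\ le x y).
Proof.
  intros H F HF Hc.
  destruct (H F HF) as [l [L C]].
  - intros x Kx. apply Hc. exists x; split; auto. apply le_refl.
  - exists l; split; auto. intros y [x [Kx Hxy]].
    destruct (C x Kx) as [U [HU Ux]]. exists U; split; auto.
    eapply open_upper; eauto.
Qed.

Lemma compact_pt x : compact O (fun y => le x y).
Proof.
  intros F HF Hc. destruct (Hc x (le_refl x)) as [U [FU Ux]].
  exists (U :: nil). split.
  - intros V [e|[]]; subst; auto.
  - intros y Hy. exists U; split; [left; auto|]. eapply open_upper; eauto.
Qed.

Lemma is_KX_intro K : (exists x, K x) -> compact O K -> upper_set le K -> is_KX O K.
Proof. intros H1 H2 H3. split; auto. split; auto. apply upper_saturated; auto. Qed.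

Lemma KX_upper (K : KX O) : upper_set le (KX_set O K).
Proof. apply saturated_upper. exact (proj2 (proj2 (proj2_sig K))). Qed.
Lemma KX_compact (K : KX O) : compact O (KX_set O K).
Proof. exact (proj1 (proj2 (proj2_sig K))). Qed.
Lemma KX_ne (K : KX O) : exists x, KX_set O K x.
Proof. exact (proj1 (proj2_sig K)). Qed.

Definition mkKX (K : P -> Prop) (H : is_KX O K) : KX O := exist _ K H.

Lemma upKX_is x : is_KX O (fun y => le x y).
Proof.
  apply is_KX_intro. exists x; apply le_refl. apply compact_pt.
  intros y z H1 H2; eapply le_trans; eauto.
Qed.
Definition upK x : KX O := mkKX _ (upKX_is x).

Definition inter (D : KX O -> Prop) := fun x => forall K, D K -> KX_set O K x.

Lemma dir_filtered (D : KX O -> Prop) : directed (Kle O) D ->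
  forall K1 K2, D K1 -> D K2 -> exists K3, D K3 /\
    (forall x, KX_set O K3 x -> KX_set O K1 x /\ KX_set O K2 x).
Proof.
  intros [_ H] K1 K2 H1 H2. destruct (H K1 K2 H1 H2) as [c [Dc [L1 L2]]].
  exists c; split; auto.
Qed.

Lemma wf_dir (D : KX O -> Prop) U : directed (Kle O) D -> O U ->
  (forall x, inter D x -> U x) -> exists K, D K /\ forall x, KX_set O K x -> U x.
Proof.
  intros HD HU H. apply Hwf; auto. apply (proj1 HD). apply dir_filtered; auto.
Qed.

Lemma inter_KX (D : KX O -> Prop) : directed (Kle O) D -> is_KX O (inter D).
Proof.
  intros HD. split; [|split].
  - apply NNPP. intro Hn.
    destruct (wf_dir D (fun _ => False) HD open_empty) as [K [DK HK]].
    + intros x Hx. apply Hn. exists x; auto.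
    + destruct (KX_ne K) as [x Hx]. apply (HK x Hx).
  - intros F HF Hc.
    destruct (wf_dir D (fun x => exists U, F U /\ U x) HD) as [K [DK HK]].
    + apply (open_union' (P -> Prop) F (fun U => U)); auto.
    + intros x Hx; apply Hc; exact Hx.
    + destruct (KX_compact K F HF HK) as [l [L C]]. exists l; split; [exact L|].
      intros x Hx. apply C. apply Hx; exact DK.
  - apply upper_saturated. intros x y Hx Hxy K DK. eapply KX_upper; eauto.
Qed.

Lemma K_dcpo : directed_complete (Kle O).
Proof.
  intros D HD. exists (mkKX _ (inter_KX D HD)). split.
  - intros d Dd x Hx. apply Hx; auto.
  - intros u Hu x Hx K DK. apply (Hu K DK); auto.
Qed.

Lemma sup_char (D : KX O -> Prop) s : directed (Kle O) D -> is_sup (Kle O) D s ->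
  forall x, KX_set O s x <-> inter D x.
Proof.
  intros HD Hs x. split.
  - intros Hx K DK. apply (proj1 Hs K DK); auto.
  - intro Hx. apply (proj2 Hs (mkKX _ (inter_KX D HD))); auto.
    intros d Dd y Hy. apply Hy; auto.
Qed.

Lemma wf_sup (D : KX O -> Prop) s U : directed (Kle O) D -> is_sup (Kle O) D s -> O U ->
  (forall x, KX_set O s x -> U x) -> exists d, D d /\ forall x, KX_set O d x -> U x.
Proof.
  intros HD Hs HU H. apply wf_dir; auto. intros x Hx. apply H. apply (sup_char D s HD Hs); auto.
Qed.

Lemma Kle_refl K : Kle O K K. Proof. intros x; auto. Qed.
Lemma Kle_trans a b c : Kle O a b -> Kle O b c -> Kle O a c.
Proof. intros H1 H2 x Hx; auto. Qed.

Lemma Q_easy (K1 K2 : KX O) : (forall x, KX_set O K2 x -> interior O (KX_set O K1) x) ->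
  way_below (Kle O) K1 K2.
Proof.
  intros H D s HD Hs Hle.
  destruct (wf_sup D s (interior O (KX_set O K1)) HD Hs (interior_open _)) as [d [Dd Hd]].
  - intros x Hx. apply H, Hle, Hx.
  - exists d; split; auto. intros x Hx. apply interior_sub; auto.
Qed.

Section LCsec.
Hypothesis HLC : locally_compact O.

Lemma list_union (W : P -> Prop) (F : (P -> Prop) -> Prop) :
  (forall U, F U -> exists L, compact O L /\ (forall y, L y -> W y) /\ (forall y, U y -> L y)) ->
  forall l, (forall U, In U l -> F U) ->
  exists L, compact O L /\ (forall y, L y -> W y) /\ (forall U, In U l -> forall y, U y -> L y).
Proof.
  intros HF l. induction l as [|U l IH]; intros Hl.
  - exists (fun _ => False). split. apply compact_empty. split. intros y []. intros U [].
  - destruct IH as [L1 [C1 [W1 S1]]]. intros V HV; apply Hl; right; auto.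
    destruct (HF U (Hl U (or_introl eq_refl))) as [L2 [C2 [W2 S2]]].
    exists (fun y => L1 y \/ L2 y). split. apply compact_union; auto. split.
    + intros y [H|H]; auto.
    + intros V [e|HV] y Hy.
      * subst. right; auto.
      * left; eapply S1; eauto.
Qed.

Lemma AL (K : KX O) W : O W -> (forall x, KX_set O K x -> W x) ->
  exists L : KX O, (forall x, KX_set O K x -> interior O (KX_set O L) x) /\
                   (forall x, KX_set O L x -> W x).
Proof.
  intros HW HKW.
  set (F := fun U => O U /\ exists L, compact O L /\ (forall y, L y -> W y) /\ (forall y, U y -> L y)).
  destruct (KX_compact K F) as [l [Hl Hc]].
  - intros U [H _]; auto.
  - intros x Kx. destruct (HLC x W HW (HKW x Kx)) as [L [CL [[U [HU [Ux HUL]]] HLW]]].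
    exists U. split; auto. split; auto. exists L; auto.
  - destruct (list_union W F) with (l := l) as [L [CL [LW SL]]].
    + intros U [_ H]; auto.
    + auto.
    + assert (HK : is_KX O (fun y => exists x, L x /\ le x y)).
      { apply is_KX_intro.
        - destruct (KX_ne K) as [x Kx]. destruct (Hc x Kx) as [U [HU Ux]].
          exists x, x. split. eapply SL; eauto. apply le_refl.
        - apply compact_up; auto.
        - intros y z [x [Lx Hxy]] Hyz. exists x; split; auto. eapply le_trans; eauto. }
      exists (mkKX _ HK). split.
      * intros x Kx. destruct (Hc x Kx) as [U [HU Ux]]. exists U. split.
        apply (proj1 (Hl U HU)). split; auto. intros y Uy. exists y; split.
        eapply SL; eauto. apply le_refl.
      * intros y [x [Lx Hxy]]. eapply open_upper; eauto.
Qed.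

Definition apx (K : KX O) := fun L : KX O => forall x, KX_set O K x -> interior O (KX_set O L) x.

Lemma approx_dir (K : KX O) : directed (Kle O) (apx K) /\ is_sup (Kle O) (apx K) K.
Proof.
  split; [split|split].
  - destruct (AL K (fun _ => True) open_full) as [L [H1 _]]. intros; auto. exists L; auto.
  - intros L1 L2 H1 H2.
    destruct (AL K (fun x => interior O (KX_set O L1) x /\ interior O (KX_set O L2) x))
      as [L3 [H3 H4]].
    + apply open_inter; apply interior_open.
    + intros x Kx; split; auto.
    + exists L3. split; auto. split.
      * intros x Hx. apply interior_sub. apply (H4 x Hx).
      * intros x Hx. apply interior_sub. apply (H4 x Hx).
  - intros L HL x Kx. apply interior_sub; auto.
  - intros u Hu y uy. apply NNPP. intro Hn.
    destruct (AL K (fun x => ~ le x y) (open_compl_down y)) as [L [H1 H2]].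
    + intros z Kz Hzy. apply Hn. eapply KX_upper; eauto.
    + apply (H2 y). apply (Hu L H1); auto. apply le_refl.
Qed.

Lemma Q_hard (K1 K2 : KX O) : way_below (Kle O) K1 K2 ->
  forall x, KX_set O K2 x -> interior O (KX_set O K1) x.
Proof.
  intros H. destruct (approx_dir K2) as [HD Hs].
  destruct (H (apx K2) K2 HD Hs (Kle_refl K2)) as [L [HL HK]].
  intros x Kx. eapply interior_mono; [|apply HL; eauto]. intros y Ly; apply HK; auto.
Qed.

Lemma wb_char (K1 K2 : KX O) : way_below (Kle O) K1 K2 <->
  (forall x, KX_set O K2 x -> interior O (KX_set O K1) x).
Proof. split. apply Q_hard. apply Q_easy. Qed.

Lemma LC_CS : continuous_semilattice (Kle O).
Proof.
  split. apply K_dcpo. intro K. destruct (approx_dir K) as [HD Hs]. split.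
  - eapply directed_ext; [|exact HD]. intro L. symmetry. apply wb_char.
  - eapply is_sup_ext; [|exact Hs]. intro L. symmetry. apply wb_char.
Qed.

Lemma LC_Q : property_Q O.
Proof. intros K1 K2. apply wb_char. Qed.

Lemma LC_UV (W : KX O -> Prop) : upper_vietoris_open O W <-> scott_open (Kle O) W.
Proof.
  split.
  - intros H. split.
    + intros K L WK HKL. destruct (H K WK) as [U [HU [H1 H2]]]. apply H2.
      intros x Lx. apply H1, HKL, Lx.
    + intros D s HD Hs Ws. destruct (H s Ws) as [U [HU [H1 H2]]].
      destruct (wf_sup D s U HD Hs HU H1) as [d [Dd Hd]]. exists d; split; auto.
  - intros [Hup Hin] K WK. destruct (approx_dir K) as [HD Hs].
    destruct (Hin (apx K) K HD Hs WK) as [L [HL WL]].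
    exists (interior O (KX_set O L)). split. apply interior_open. split. apply HL.
    intros M HM. apply (Hup L M WL). intros x Mx. apply interior_sub, HM, Mx.
Qed.

End LCsec.

Lemma UV_scott_wf (W : KX O -> Prop) : upper_vietoris_open O W -> scott_open (Kle O) W.
Proof.
  intros H. split.
  + intros K L WK HKL. destruct (H K WK) as [U [HU [H1 H2]]]. apply H2.
    intros x Lx. apply H1, HKL, Lx.
  + intros D s HD Hs Ws. destruct (H s Ws) as [U [HU [H1 H2]]].
    destruct (wf_sup D s U HD Hs HU H1) as [d [Dd Hd]]. exists d; split; auto.
Qed.

Lemma CS_LC : continuous_semilattice (Kle O) -> locally_compact O.
Proof.
  intros [_ HC] x U HU Ux.
  destruct (HC (upK x)) as [HD Hs].
  destruct (wf_sup _ (upK x) U HD Hs HU) as [L [HL LU]].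
  { intros y Hy. eapply open_upper; eauto. }
  set (V := fun y => way_below (Kle O) L (upK y)).
  assert (HV : O V).
  { split.
    - intros y z Hy Hyz. apply (wb_trans_r (Kle O) Kle_trans L (upK y) (upK z) Hy).
      intros w Hw. simpl in *. eapply le_trans; eauto.
    - intros D s HD' Hs' Vs.
      destruct (interpolate (Kle O) Kle_refl Kle_trans HC L (upK s) Vs) as [M [H1 H2]].
      set (DK := fun K : KX O => exists d, D d /\ forall z, KX_set O K z <-> le d z).
      assert (HDK : directed (Kle O) DK).
      { split.
        - destruct (proj1 HD') as [d Dd]. exists (upK d), d. split; auto. intro z; simpl; tauto.
        - intros K1 K2 [d1 [D1 E1]] [d2 [D2 E2]].
          destruct (proj2 HD' d1 d2 D1 D2) as [d3 [D3 [L1 L2]]].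
          exists (upK d3). split. exists d3; split; auto. intro z; simpl; tauto.
          split; intros z Hz; simpl in Hz; [apply E1|apply E2]; eapply le_trans; eauto. }
      assert (HsK : is_sup (Kle O) DK (upK s)).
      { split.
        - intros K [d [Dd E]] z Hz. apply E. simpl in Hz. eapply le_trans; [|exact Hz].
          apply (proj1 Hs' d Dd).
        - intros u Hu z Hz. simpl. apply (proj2 Hs'). intros d Dd.
          apply (Hu (upK d)). exists d; split; auto. intro w; simpl; tauto. exact Hz. }
      destruct (H2 DK (upK s) HDK HsK (Kle_refl _)) as [K [[d [Dd E]] HMK]].
      exists d. split; auto. unfold V. apply (wb_trans_r (Kle O) Kle_trans L M (upK d) H1).
      intros z Hz. apply HMK. apply E. exact Hz. }
  exists (KX_set O L). split. apply KX_compact. split; auto.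
  exists V. split; auto. split.
  - exact HL.
  - intros y Vy. apply (wb_le (Kle O) Kle_refl) in Vy. apply Vy. simpl. apply le_refl.
Qed.

Definition mkO (U : P -> Prop) (H : O U) : OX O := exist _ U H.
Definition setO (V : OX O) : P -> Prop := proj1_sig V.
Lemma setO_open (V : OX O) : O (setO V). Proof. exact (proj2_sig V). Qed.

Lemma Ole_refl V : Ole O V V. Proof. intros x; auto. Qed.
Lemma Ole_trans a b c : Ole O a b -> Ole O b c -> Ole O a c.
Proof. intros H1 H2 x Hx; auto. Qed.

Lemma bigU_open (D : OX O -> Prop) : O (fun x => exists V, D V /\ setO V x).
Proof. apply (open_union' (OX O) D setO). intros i _; apply setO_open. Qed.

Definition bigU (D : OX O -> Prop) : OX O := mkO _ (bigU_open D).

Lemma OX_sup (D : OX O -> Prop) : is_sup (Ole O) D (bigU D).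
Proof.
  split.
  - intros d Dd x Hx. exists d; auto.
  - intros u Hu x [V [DV Vx]]. apply (Hu V DV); auto.
Qed.

Lemma dir_list (D : OX O -> Prop) : directed (Ole O) D ->
  forall l : list (P -> Prop), (forall G, In G l -> exists d, D d /\ forall x, G x -> setO d x) ->
  exists d, D d /\ forall G, In G l -> forall x, G x -> setO d x.
Proof.
  intros [[d0 D0] HD] l. induction l as [|G l IH]; intros Hl.
  - exists d0; split; auto. intros G [].
  - destruct IH as [d1 [D1 H1]]. intros G' HG'; apply Hl; right; auto.
    destruct (Hl G (or_introl eq_refl)) as [d2 [D2 H2]].
    destruct (HD d1 d2 D1 D2) as [d3 [D3 [L1 L2]]].
    exists d3; split; auto. intros G' [e|HG'] x Hx.
    + subst. apply L2, H2, Hx.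
    + apply L1. eapply H1; eauto.
Qed.

Lemma compact_wb (K : P -> Prop) (U V : OX O) : compact O K ->
  (forall x, K x -> setO U x) -> (forall x, setO V x -> K x) -> way_below (Ole O) V U.
Proof.
  intros HK HKU HVK D s HD Hs HUs.
  assert (Hsub : forall x, K x -> exists d, D d /\ setO d x).
  { intros x Kx. apply (proj2 Hs (bigU D) (proj1 (OX_sup D))). apply HUs, HKU, Kx. }
  destruct (HK (fun G => exists d, D d /\ G = setO d)) as [l [Hl Hc]].
  - intros G [d [_ e]]. subst. apply setO_open.
  - intros x Kx. destruct (Hsub x Kx) as [d [Dd dx]]. exists (setO d). split; auto. exists d; auto.
  - destruct (dir_list D HD l) as [d [Dd Hd]].
    + intros G HG. destruct (Hl G HG) as [d [Dd e]]. subst. exists d; auto.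
    + exists d. split; auto. intros x Vx. destruct (Hc x (HVK x Vx)) as [G [HG Gx]].
      eapply Hd; eauto.
Qed.

Lemma LC_CC : locally_compact O -> core_compact O.
Proof.
  intros HLC. split.
  - intros D. exists (bigU D). apply OX_sup.
  - intros U.
    assert (E0 : way_below (Ole O) (mkO _ open_empty) U).
    { intros D s [[d Dd] _] _ _. exists d; split; auto. intros x []. }
    split; [split|split].
    + exists (mkO _ open_empty). exact E0.
    + intros V1 V2 H1 H2.
      exists (mkO _ (open_union2 _ _ (setO_open V1) (setO_open V2))).
      split; [|split; intros x Hx; simpl; auto].
      intros D s HD Hs HUs.
      destruct (H1 D s HD Hs HUs) as [d1 [D1 L1]].
      destruct (H2 D s HD Hs HUs) as [d2 [D2 L2]].
      destruct (proj2 HD d1 d2 D1 D2) as [d3 [D3 [L3 L4]]].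
      exists d3; split; auto. intros x [Hx|Hx]; [apply L3, L1|apply L4, L2]; exact Hx.
    + intros V HV. apply (wb_le (Ole O) Ole_refl); auto.
    + intros u Hu x Ux.
      destruct (HLC x (setO U) (setO_open U) Ux) as [K [HK [Hi HKU]]].
      set (V := mkO _ (interior_open K)).
      apply (Hu V).
      * apply (compact_wb K); auto. intros y Hy; apply interior_sub; exact Hy.
      * exact Hi.
Qed.

Lemma lunion_open (l : list (P -> Prop)) : (forall G, In G l -> O G) ->
  O (fun x => exists G, In G l /\ G x).
Proof. intros H. apply (open_union' (P -> Prop) (fun G => In G l) (fun G => G)); auto. Qed.

Section CCsec.
Hypothesis HCC : core_compact O.

Lemma RC (U V : OX O) (F : (P -> Prop) -> Prop) : way_below (Ole O) V U ->
  (forall G, F G -> O G) -> (forall x, setO U x -> exists G, F G /\ G x) ->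
  exists l, (forall G, In G l -> F G) /\ forall x, setO V x -> exists G, In G l /\ G x.
Proof.
  intros H HFo Hc.
  set (D := fun W : OX O => exists l, (forall G, In G l -> F G) /\
              forall x, setO W x <-> exists G, In G l /\ G x).
  assert (HD : directed (Ole O) D).
  { split.
    - exists (mkO _ open_empty). exists nil. split. intros G []. intro x; simpl.
      split. intros []. intros [G [[] _]].
    - intros W1 W2 [l1 [F1 E1]] [l2 [F2 E2]].
      assert (Ho : forall G, In G (l1 ++ l2) -> O G).
      { intros G HG. apply HFo. apply in_app_or in HG. destruct HG; auto. }
      exists (mkO _ (lunion_open _ Ho)). split; [|split].
      + exists (l1 ++ l2). split. intros G HG. apply in_app_or in HG. destruct HG; auto.
        intro x; simpl; tauto.
      + intros x Hx. apply E1 in Hx. destruct Hx as [G [HG Gx]]. exists G; split; auto.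
        apply in_or_app; auto.
      + intros x Hx. apply E2 in Hx. destruct Hx as [G [HG Gx]]. exists G; split; auto.
        apply in_or_app; auto. }
  destruct (H D (bigU D) HD (OX_sup D)) as [W [[l [Fl El]] HVW]].
  - intros x Ux. destruct (Hc x Ux) as [G [FG Gx]].
    exists (mkO G (HFo G FG)). split; auto. exists (G :: nil). split.
    + intros G' [e|[]]; subst; auto.
    + intro y; simpl. split. intros Gy; exists G; auto. intros [G' [[e|[]] Gy]]; subst; auto.
  - exists l. split; auto. intros x Vx. apply El. apply HVW. exact Vx.
Qed.

Lemma RCd (U V : OX O) (F : (P -> Prop) -> Prop) : way_below (Ole O) V U ->
  (forall G, F G -> O G) -> (exists G, F G) ->
  (forall G1 G2, F G1 -> F G2 -> exists G3, F G3 /\ (forall x, G1 x -> G3 x) /\ (forall x, G2 x -> G3 x)) ->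
  (forall x, setO U x -> exists G, F G /\ G x) ->
  exists G, F G /\ forall x, setO V x -> G x.
Proof.
  intros H HFo [G0 F0] Hdir Hc.
  destruct (RC U V F H HFo Hc) as [l [Fl Cl]].
  assert (Hl : forall l : list (P -> Prop), (forall G, In G l -> F G) ->
     exists G3, F G3 /\ forall G, In G l -> forall x, G x -> G3 x).
  { intro l'. induction l' as [|G l' IH]; intros Hl'.
    - exists G0; split; auto. intros G [].
    - destruct IH as [G1 [F1 H1]]. intros G' HG'; apply Hl'; right; auto.
      destruct (Hdir G1 G F1 (Hl' G (or_introl eq_refl))) as [G3 [F3 [L1 L2]]].
      exists G3; split; auto. intros G' [e|HG'] x Hx. subst; auto. apply L1; eapply H1; eauto. }
  destruct (Hl l Fl) as [G3 [F3 H3]]. exists G3; split; auto.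
  intros x Vx. destruct (Cl x Vx) as [G [HG Gx]]. eapply H3; eauto.
Qed.

Lemma pt_wb (U : OX O) x : setO U x -> exists V, way_below (Ole O) V U /\ setO V x.
Proof.
  intros Ux. destruct (proj2 HCC U) as [_ [_ Hl]].
  assert (H := Hl (bigU (fun V => way_below (Ole O) V U)) (proj1 (OX_sup _))).
  destruct (H x Ux) as [V [HV Vx]]. exists V; auto.
Qed.

Definition step (V W : OX O) : OX O :=
  epsilon (inhabits W) (fun W' => way_below (Ole O) V W' /\ way_below (Ole O) W' W).

Lemma step_spec V W : way_below (Ole O) V W ->
  way_below (Ole O) V (step V W) /\ way_below (Ole O) (step V W) W.
Proof.
  intros H. unfold step. apply epsilon_spec.
  apply (interpolate (Ole O) Ole_refl Ole_trans (proj2 HCC)); auto.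
Qed.

Section Chain.
Variables (V U0 : OX O).
Hypothesis HVU : way_below (Ole O) V U0.

Definition Wn (n : nat) : OX O := Nat.iter n (step V) U0.

Lemma Wn_wb n : way_below (Ole O) V (Wn n).
Proof. induction n as [|n IH]. exact HVU. apply (step_spec V (Wn n) IH). Qed.

Lemma Wn_step n : way_below (Ole O) (Wn (S n)) (Wn n).
Proof. apply (step_spec V (Wn n) (Wn_wb n)). Qed.

Lemma Wn_mono n m : n <= m -> forall x, setO (Wn m) x -> setO (Wn n) x.
Proof.
  intros Hnm. induction Hnm as [|m Hnm IH]; intros x Hx; auto.
  apply IH. apply (wb_le (Ole O) Ole_refl _ _ (Wn_step m)). exact Hx.
Qed.

Definition Kc := fun y => forall n, setO (Wn n) y.

Lemma Kc_compact : compact O Kc.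
Proof.
  intros F HFo Hcov.
  set (G := fun y => exists U, F U /\ U y).
  assert (HG : O G) by (apply (open_union' (P -> Prop) F (fun U => U)); auto).
  destruct (classic (exists n, forall y, setO (Wn n) y -> G y)) as [[n Hn]|Hneg].
  - destruct (RC (Wn n) (Wn (S n)) F (Wn_step n) HFo Hn) as [l [Fl Cl]].
    exists l; split; [exact Fl|]. intros x Kx. apply Cl, Kx.
  - exfalso.
    assert (Hneg' : forall n, exists y, setO (Wn n) y /\ ~ G y).
    { intro n. apply NNPP. intro H1. apply Hneg. exists n. intros y Hy. apply NNPP. intro H2.
      apply H1. exists y; auto. }
    set (fam := fun C : P -> Prop => O (fun x => ~ C x) /\ (forall x, C x -> ~ G x) /\
                   (forall n, exists y, C y /\ setO (Wn n) y)).
    assert (FB : fam (fun x => ~ G x)).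
    { split; [|split].
      - apply (open_ext G); [|exact HG]. intro x; split. intros Gx Hn; auto. intro H; apply NNPP; exact H.
      - intros x H; exact H.
      - intro n. destruct (Hneg' n) as [y [H1 H2]]. exists y; split; assumption. }
    set (T := { C : P -> Prop | fam C }).
    set (R := fun a b : T => forall x, proj1_sig b x -> proj1_sig a x).
    destruct (zorn_prop T (exist _ _ FB) R) as [[C HC] Hmax].
    + intros t x; auto.
    + intros r s t H1 H2 x Hx; auto.
    + intros A Htot.
      set (Ct := fun x => ~ G x /\ forall c : T, A c -> proj1_sig c x).
      assert (Hfam : fam Ct).
      { split; [|split].
        - apply (open_ext (fun x => exists U, (U = G \/ exists c : T, A c /\ U = (fun y => ~ proj1_sig c y)) /\ U x)).
          + intro x. split.
            * intros [U [[e|[c [Ac e]]] Ux]] [H1 H2].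
              -- subst U. exact (H1 Ux).
              -- subst U. exact (Ux (H2 c Ac)).
            * intro H. destruct (classic (G x)) as [Gx|nGx]. exists G; auto.
              destruct (classic (exists c : T, A c /\ ~ proj1_sig c x)) as [[c [Ac nc]]|Hn].
              -- exists (fun y => ~ proj1_sig c y). split; auto. right; exists c; auto.
              -- exfalso. apply H. split; auto. intros c Ac. apply NNPP. intro nc. apply Hn. exists c; auto.
          + apply (open_union' (P -> Prop) _ (fun U => U)). intros U [e|[c [Ac e]]]; subst U; [exact HG|].
            exact (proj1 (proj2_sig c)).
        - intros x [H _]; auto.
        - intro n. apply NNPP. intro Hn.
          set (FF := fun U => U = G \/ exists c : T, A c /\ U = (fun y => ~ proj1_sig c y)).
          destruct (RCd (Wn n) (Wn (S n)) FF (Wn_step n)) as [U [FU HU]].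
          + intros U [e|[c [Ac e]]]; subst U; [exact HG|]. exact (proj1 (proj2_sig c)).
          + exists G; left; reflexivity.
          + intros G1 G2 H1 H2.
            destruct H1 as [e1|[c1 [A1 e1]]]; destruct H2 as [e2|[c2 [A2 e2]]]; subst G1 G2.
            * exists G; split; [left; reflexivity|split; intros x Hx; exact Hx].
            * exists (fun y => ~ proj1_sig c2 y). split. right; exists c2; auto.
              split; [intros x Gx Hc; exact (proj1 (proj2 (proj2_sig c2)) x Hc Gx)|intros x Hx; exact Hx].
            * exists (fun y => ~ proj1_sig c1 y). split. right; exists c1; auto.
              split; [intros x Hx; exact Hx|intros x Gx Hc; exact (proj1 (proj2 (proj2_sig c1)) x Hc Gx)].
            * destruct (Htot c1 c2 A1 A2) as [H12|H21].
              -- exists (fun y => ~ proj1_sig c2 y). split. right; exists c2; auto.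
                 split; [intros x H1 H2; apply H1, H12, H2|intros x Hx; exact Hx].
              -- exists (fun y => ~ proj1_sig c1 y). split. right; exists c1; auto.
                 split; [intros x Hx; exact Hx|intros x H1 H2; apply H1, H21, H2].
          + intros x Wx. destruct (classic (G x)) as [Gx|nGx]. exists G; split; [left; reflexivity|exact Gx].
            destruct (classic (exists c : T, A c /\ ~ proj1_sig c x)) as [[c [Ac nc]]|Hn'].
            * exists (fun y => ~ proj1_sig c y). split; auto. right; exists c; auto.
            * exfalso. apply Hn. exists x. split; auto. split; auto. intros c Ac.
              apply NNPP. intro nc. apply Hn'. exists c; auto.
          + destruct FU as [e|[c [Ac e]]]; subst U.
            * destruct (Hneg' (S n)) as [y [Wy nGy]]. apply nGy, HU, Wy.
            * destruct (proj2 (proj2 (proj2_sig c)) (S n)) as [y [cy Wy]].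
              apply (HU y Wy). exact cy. }
      exists (exist _ Ct Hfam). intros s As x [_ Hx]. apply Hx; auto.
    + destruct HC as [HCo [HCG HCW]].
      assert (Pp : forall U, O U -> (exists y, C y /\ U y) ->
                     exists m, forall z, C z -> setO (Wn m) z -> U z).
      { intros U HU [y [Cy Uy]]. apply NNPP. intro Hn.
        assert (HC' : fam (fun x => C x /\ ~ U x)).
        { split; [|split].
          - apply (open_ext (fun x => ~ C x \/ U x)).
            + intro x. split. intros [H|H] [H1 H2]; [exact (H H1)|exact (H2 H)].
              intro H. destruct (classic (U x)) as [Ux|nUx]. right; exact Ux.
              left; intro Cx; apply H; split; assumption.
            + apply open_union2; auto.
          - intros x [Cx _]; auto.
          - intro m. apply NNPP. intro Hm. apply Hn. exists m. intros z Cz Wz.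
            apply NNPP. intro nU. apply Hm. exists z; auto. }
        assert (HR : R (exist _ C (conj HCo (conj HCG HCW))) (exist _ _ HC')).
        { intros x [Cx _]; auto. }
        apply Hmax in HR. simpl in HR. destruct (HR y Cy) as [_ nU]. auto. }
      destruct (HCW 0) as [y0 _].
      set (xs := fun m => epsilon (inhabits y0) (fun y => C y /\ setO (Wn m) y)).
      assert (Hxs : forall m, C (xs m) /\ setO (Wn m) (xs m)).
      { intro m. apply epsilon_spec. apply HCW. }
      set (Kn := fun n y => exists m, n <= m /\ le (xs m) y).
      assert (HKn : forall n, is_KX O (Kn n)).
      { intro n. apply is_KX_intro.
        - exists (xs n), n. split; auto. apply le_refl.
        - intros F2 HF2 Hc2.
          destruct (Hc2 (xs n)) as [U0' [FU0 Ux0]]. exists n; split; auto; apply le_refl.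
          destruct (Pp U0' (HF2 U0' FU0)) as [k Hk]. exists (xs n); split; auto. apply Hxs.
          assert (Hj : forall j, exists l, (forall G', In G' l -> F2 G') /\
                        forall m, n <= m -> m < n + j -> exists G', In G' l /\ G' (xs m)).
          { intro j. induction j as [|j IH].
            - exists nil. split. intros G' []. intros m H1 H2. exfalso; lia.
            - destruct IH as [l [Fl Cl]].
              destruct (Hc2 (xs (n + j))) as [G' [FG' HG']]. exists (n + j); split; [lia|apply le_refl].
              exists (G' :: l). split.
              + intros G'' [e|HG'']; subst; auto.
              + intros m H1 H2. destruct (Nat.eq_dec m (n + j)) as [e|ne].
                * subst. exists G'; split; auto. left; auto.
                * destruct (Cl m H1) as [G'' [HG'' Gm]]. lia. exists G''; split; auto. right; auto. }
          destruct (Hj k) as [l [Fl Cl]].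
          exists (U0' :: l). split.
          + intros G' [e|HG']; subst; auto.
          + intros y [m [Hnm Hxy]]. destruct (Nat.lt_ge_cases m (n + k)) as [Hlt|Hge].
            * destruct (Cl m Hnm Hlt) as [G' [HG' Gm]]. exists G'. split. right; auto.
              eapply open_upper; eauto.
            * exists U0'. split. left; auto. eapply open_upper; [apply HF2; exact FU0| |exact Hxy].
              apply Hk. apply Hxs. apply (Wn_mono k m). lia. apply Hxs.
        - intros y z [m [Hm Hy]] Hyz. exists m; split; auto. eapply le_trans; eauto. }
      destruct (Hwf G (fun K => exists n, forall y, KX_set O K y <-> Kn n y) HG) as [K [[n En] HK]].
      * exists (mkKX _ (HKn 0)), 0. intro y; simpl; tauto.
      * intros K1 K2 [n1 E1] [n2 E2]. exists (mkKX _ (HKn (max n1 n2))). split.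
        exists (max n1 n2). intro y; simpl; tauto.
        intros y Hy; simpl in Hy. destruct Hy as [m [Hm Hy]]. split.
        apply E1. exists m; split; auto. lia. apply E2. exists m; split; auto. lia.
      * intros y Hy. apply Hcov. intro k.
        destruct (Hy (mkKX _ (HKn k))) as [m [Hkm Hxy]]. exists k; intro z; simpl; tauto.
        eapply open_upper; [apply setO_open| |exact Hxy]. apply (Wn_mono k m Hkm). apply Hxs.
      * assert (Hx : Kn n (xs n)). exists n; split; auto. apply le_refl.
        apply En in Hx. apply (HCG (xs n)). apply Hxs. apply HK; auto.
Qed.

End Chain.

Lemma CC_LC : locally_compact O.
Proof.
  intros x U HU Ux.
  set (U0 := mkO U HU).
  destruct (pt_wb U0 x Ux) as [V [HVU Vx]].
  exists (Kc V U0). split. apply Kc_compact; auto. split.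
  - exists (setO V). split. apply setO_open. split; auto.
    intros y Vy n. apply (wb_le (Ole O) Ole_refl _ _ (Wn_wb V U0 HVU n)). exact Vy.
  - intros y Hy. apply (Hy 0).
Qed.

End CCsec.
End Main.

Theorem mainTheorem8 (P : Type) (le : P -> P -> Prop)
  (Hpo : partial_order le) (Hdcpo : directed_complete le)
  (Hwf : well_filtered (scott_open le)) :
  (locally_compact (scott_open le) <->
     continuous_semilattice (Kle (scott_open le)) /\
     (forall W : KX (scott_open le) -> Prop,
        upper_vietoris_open (scott_open le) W <-> scott_open (Kle (scott_open le)) W)) /\
  (locally_compact (scott_open le) <->
     continuous_semilattice (Kle (scott_open le)) /\ property_Q (scott_open le)) /\
  (locally_compact (scott_open le) <->
     continuous_semilattice (Kle (scott_open le))) /\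
  (locally_compact (scott_open le) <-> core_compact (scott_open le)).
Proof.
  split; [|split; [|split]].
  - split.
    + intro H. split. apply (LC_CS P le Hpo Hwf H). intro W. apply (LC_UV P le Hpo Hwf H).
    + intros [H _]. apply (CS_LC P le Hpo Hwf H).
  - split.
    + intro H. split. apply (LC_CS P le Hpo Hwf H). apply (LC_Q P le Hpo Hwf H).
    + intros [H _]. apply (CS_LC P le Hpo Hwf H).
  - split.
    + intro H. apply (LC_CS P le Hpo Hwf H).
    + intro H. apply (CS_LC P le Hpo Hwf H).
  - split.
    + intro H. apply (LC_CC P le H).
    + intro H. apply (CC_LC P le Hpo Hwf H).
Qed.
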